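(* Let $n \ge 3$ and let $x_1 < x_2 < \dots < x_n$ be real numbers. Then the maximum likelihood estimate $\hat\theta$ of the sample from the Cauchy distribution satisfies $$\left|\hat\theta - \frac{x_1+x_n}{2}\right| \le \frac{x_n - x_1}{2}.$$
   Context: $\mathbb{H} = \{\theta\in\mathbb{C}:\Im\theta>0\}$. The Cauchy distribution with parameter $\theta = \mu + i\sigma\in\mathbb{H}$ has density $f(x;\theta) = \frac{\sigma}{\pi}\frac{1}{(x-\mu)^2+\sigma^2}$; the maximum likelihood estimate is the (unique) maximizer over $\mathbb{H}$ of $\prod_{j=1}^n f(x_j;\theta)$. *)

(* Defs.v *)
From HB Require Import structures.
From mathcomp Require Import all_boot all_order all_algebra.
From mathcomp Require Import complex.
From mathcomp Require Import reals trigo.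
Set Implicit Arguments. Unset Strict Implicit. Unset Printing Implicit Defensive.
Import Order.TTheory GRing.Theory Num.Theory.
Local Open Scope ring_scope.
Local Open Scope complex_scope.

Definition upper_half_plane (R : realType) : pred R[i] := fun t => 0 < complex.Im t.

Definition cauchy_density (R : realType) (theta : R[i]) (x : R) : R :=
  complex.Im theta / (pi * ((x - complex.Re theta) ^+ 2 + complex.Im theta ^+ 2)).

(* Likelihood of the sample x_0, ..., x_(n-1) (0-indexed). *)
Definition cauchy_likelihood (R : realType) (n : nat) (x : nat -> R)
  (theta : R[i]) : R := \prod_(i < n) cauchy_density theta (x i).

Definition is_cauchy_MLE (R : realType) (n : nat) (x : nat -> R)
  (theta : R[i]) : Prop :=
  theta \in @upper_half_plane R /\
  forall t : R[i], t \in @upper_half_plane R ->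
    cauchy_likelihood n x t <= cauchy_likelihood n x theta.

Definition cmod (R : realType) (z : R[i]) : R :=
  Num.sqrt (complex.Re z ^+ 2 + complex.Im z ^+ 2).

(* Main.v *)
Require Import Defs.
From HB Require Import structures.
From mathcomp Require Import all_boot all_order all_algebra.
From mathcomp Require Import complex.
From mathcomp Require Import reals trigo.
From mathcomp Require Import ring lra.
Import Order.TTheory GRing.Theory Num.Theory.
Local Open Scope ring_scope.
Local Open Scope complex_scope.

Lemma term_le (R : realType) (P b k t a : R) :
  0 < P -> 0 < b -> 0 < k -> k < 1 -> t ^+ 2 <= k * (a ^+ 2 + b ^+ 2) ->
  b / (P * ((t - a) ^+ 2 + b ^+ 2)) <= (k * b) / (P * ((t - k * a) ^+ 2 + (k * b) ^+ 2)).
Proof.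
move=> HP Hb Hk Hk1 Ht.
have D1 : 0 < P * ((t - a) ^+ 2 + b ^+ 2).
  apply: mulr_gt0 => //; apply: ltr_wpDl; [exact: sqr_ge0| exact: exprn_gt0].
have D2 : 0 < P * ((t - k * a) ^+ 2 + (k * b) ^+ 2).
  apply: mulr_gt0 => //; apply: ltr_wpDl; [exact: sqr_ge0| apply: exprn_gt0; exact: mulr_gt0].
rewrite ler_pdivlMr // mulrAC ler_pdivrMr //.
rewrite -subr_le0.
have -> : b * (P * ((t - k * a) ^+ 2 + (k * b) ^+ 2)) - k * b * (P * ((t - a) ^+ 2 + b ^+ 2))
   = (b * P * (1 - k)) * (t ^+ 2 - k * (a ^+ 2 + b ^+ 2)) by ring.
rewrite pmulr_rle0; first by rewrite subr_le0.
apply: mulr_gt0; [exact: mulr_gt0| by rewrite subr_gt0].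
Qed.

Lemma term_lt (R : realType) (P b k t a : R) :
  0 < P -> 0 < b -> 0 < k -> k < 1 -> t ^+ 2 < k * (a ^+ 2 + b ^+ 2) ->
  b / (P * ((t - a) ^+ 2 + b ^+ 2)) < (k * b) / (P * ((t - k * a) ^+ 2 + (k * b) ^+ 2)).
Proof.
move=> HP Hb Hk Hk1 Ht.
have D1 : 0 < P * ((t - a) ^+ 2 + b ^+ 2).
  apply: mulr_gt0 => //; apply: ltr_wpDl; [exact: sqr_ge0| exact: exprn_gt0].
have D2 : 0 < P * ((t - k * a) ^+ 2 + (k * b) ^+ 2).
  apply: mulr_gt0 => //; apply: ltr_wpDl; [exact: sqr_ge0| apply: exprn_gt0; exact: mulr_gt0].
rewrite ltr_pdivlMr // mulrAC ltr_pdivrMr //.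
rewrite -subr_lt0.
have -> : b * (P * ((t - k * a) ^+ 2 + (k * b) ^+ 2)) - k * b * (P * ((t - a) ^+ 2 + b ^+ 2))
   = (b * P * (1 - k)) * (t ^+ 2 - k * (a ^+ 2 + b ^+ 2)) by ring.
rewrite pmulr_rlt0; first by rewrite subr_lt0.
apply: mulr_gt0; [exact: mulr_gt0| by rewrite subr_gt0].
Qed.

Lemma prod_lt (R : realType) (n : nat) (F G : 'I_n -> R) (i0 : 'I_n) :
  (forall i, 0 < F i <= G i) -> F i0 < G i0 -> \prod_i F i < \prod_i G i.
Proof.
move=> H H0.
rewrite (bigD1 i0) //= [X in _ < X](bigD1 i0) //=.
have Hp : 0 < \prod_(i | i != i0) F i by apply: prodr_gt0 => i _; case/andP: (H i).
have Hq : \prod_(i | i != i0) F i <= \prod_(i | i != i0) G i.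
  apply: ler_prod => i _; case/andP: (H i) => h1 h2; by rewrite ltW.
have HF0 : 0 < F i0 by case/andP: (H i0).
apply: (lt_le_trans (y := G i0 * \prod_(i | i != i0) F i)).
  by rewrite ltr_pM2r.
rewrite ler_pM2l //; exact: lt_trans H0.
Qed.

Theorem mainTheorem10 (R : realType) (n : nat) (x : nat -> R)
  (hn : (3 <= n)%N)
  (hx : forall i j : nat, (i < j)%N -> (j < n)%N -> x i < x j)
  (theta : R[i]) (hmle : is_cauchy_MLE n x theta) :
  cmod (theta - ((x 0%N + x n.-1) / 2)%:C) <= (x n.-1 - x 0%N) / 2.
Proof.
case: hmle => Hth Hmax.
move: Hth Hmax; case: theta => p q Hth Hmax.
have Hq : 0 < q by exact: Hth.
set c := (x 0%N + x n.-1) / 2.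
set r := (x n.-1 - x 0%N) / 2.
have hn1 : (n.-1 < n)%N by move: hn; case: (n).
have H0n : x 0%N < x n.-1 by apply: hx => //; move: hn; case: (n) => [|[|m]].
have Hr : 0 < r by rewrite /r; lra.
rewrite /cmod /=.
set a := p - c.
rewrite (_ : Num.sqrt _ = Num.sqrt (a ^+ 2 + q ^+ 2)); last first.
  by congr (Num.sqrt _); rewrite /a; ring.
rewrite leNgt; apply/negP => Hlt.
set s := a ^+ 2 + q ^+ 2.
have Hs : 0 < s by rewrite /s; apply: ltr_wpDl; [exact: sqr_ge0| exact: exprn_gt0].
have Hrs : r ^+ 2 < s.
  have e := sqr_sqrtr (ltW Hs).
  have hs0 := sqrtr_ge0 s.
  rewrite -e; nra.
set k := r ^+ 2 / s.
have Hk : 0 < k by rewrite /k divr_gt0 // exprn_gt0.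
have Hk1 : k < 1 by rewrite /k ltr_pdivrMr // mul1r.
have Hks : k * s = r ^+ 2 by rewrite /k divfK // gt_eqF.
pose t := (c + k * a) +i* (k * q).
have Htin : t \in upper_half_plane (R:=R).
  by rewrite /t /upper_half_plane /in_mem /= mulr_gt0.
have Hl := Hmax t Htin.
have Hbd : forall j, (j < n)%N -> x 0%N <= x j <= x n.-1.
  move=> j hj; apply/andP; split.
    case: j hj => [|j] hj; first by [].
    by apply/ltW/hx.
  have : (j <= n.-1)%N by rewrite -ltnS prednK // (leq_ltn_trans _ hj).
  rewrite leq_eqVlt => /orP [/eqP -> //|hj1].
  by apply/ltW/hx.
have H1n : (1 < n)%N by apply: leq_trans hn.
have Hx1 : x 0%N < x 1%N < x n.-1.
  apply/andP; split; apply: hx => //.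
  by move: hn; case: (n) => [|[|[|m]]].
have key : forall j, (j < n)%N ->
   q / (pi * ((x j - p) ^+ 2 + q ^+ 2)) <=
   (k * q) / (pi * ((x j - (c + k * a)) ^+ 2 + (k * q) ^+ 2)).
  move=> j hj.
  have Ht : (x j - c) ^+ 2 <= k * (a ^+ 2 + q ^+ 2).
    rewrite -/s Hks; case/andP: (Hbd j hj) => h1 h2.
    rewrite /c /r; nra.
  have := @term_le R pi q k _ a (pi_gt0 R) Hq Hk Hk1 Ht.
  have -> : x j - c - a = x j - p by rewrite /a; ring.
  by have -> : x j - c - k * a = x j - (c + k * a) by ring.
have keylt :
   q / (pi * ((x 1%N - p) ^+ 2 + q ^+ 2)) <
   (k * q) / (pi * ((x 1%N - (c + k * a)) ^+ 2 + (k * q) ^+ 2)).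
  have Ht : (x 1%N - c) ^+ 2 < k * (a ^+ 2 + q ^+ 2).
    rewrite -/s Hks; case/andP: Hx1 => h1 h2.
    rewrite /c /r; nra.
  have := @term_lt R pi q k _ a (pi_gt0 R) Hq Hk Hk1 Ht.
  have -> : x 1%N - c - a = x 1%N - p by rewrite /a; ring.
  by have -> : x 1%N - c - k * a = x 1%N - (c + k * a) by ring.
have : cauchy_likelihood n x (p +i* q) < cauchy_likelihood n x t.
  apply: (@prod_lt R n _ _ (Ordinal H1n)) => [i|]; last exact: keylt.
  apply/andP; split; last exact: key.
  rewrite /cauchy_density /=.
  apply: divr_gt0 => //; apply: mulr_gt0; first exact: (pi_gt0 R).
  apply: ltr_wpDl; [exact: sqr_ge0| exact: exprn_gt0].
by rewrite ltNge Hl.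
Qed.
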